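(* Let $K\subset M$ be fields, let $\bar M$ be a separable closure of $M$, and let $K^a$ (resp. $\bar K$) be the separable closure of $K$ in $M$ (resp. in $\bar M$), i.e. the set of elements of $M$ (resp. $\bar M$) that are separable algebraic over $K$. Suppose that for every finite separable extension $L_1/M$ with $L_1\subset \bar M$ there exists a finite separable extension $L/K$ with $L\subset M$ such that, denoting by $\tilde L\subset\bar M$ the Galois closure of $L/K$, the compositum $\tilde L M$ contains $L_1$. Then the Galois closure of $K^a/K$ (inside $\bar M$) is $\bar K$.
   Context: The Galois closure of a separable algebraic extension $E/K$ inside $\bar M$ is the smallest subfield of $\bar M$ containing $E$ that is Galois over $K$. *)

(* Defs.v *)
From HB Require Import structures.
From mathcomp Require Import all_boot all_order all_algebra all_field.
Set Implicit Arguments. Unset Strict Implicit. Unset Printing Implicit Defensive.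
Import GRing.Theory.
Local Open Scope ring_scope.

(* Everything lives inside one ambient field F, playing the role of Mbar.
   Subfields / subsets of F are Prop-valued predicates F -> Prop. *)
Section Defs.
Variable F : fieldType.

Definition subfield (S : F -> Prop) : Prop :=
  [/\ S 0, S 1, (forall x y, S x -> S y -> S (x - y)),
      (forall x y, S x -> S y -> S (x * y)) & (forall x, S x -> S x^-1)].

Definition subsetF (A B : F -> Prop) : Prop := forall x, A x -> B x.

Definition poly_over (S : F -> Prop) (p : {poly F}) : Prop := forall i, S p`_i.

Definition sep_alg_over (S : F -> Prop) (x : F) : Prop :=
  exists p : {poly F}, [/\ poly_over S p, p != 0, separable_poly p & root p x].

Definition separably_closed : Prop :=
  forall p : {poly F}, separable_poly p -> (1 < size p)%N -> exists x, root p x.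

Definition finite_over (K L : F -> Prop) : Prop :=
  exists s : seq F, forall x, L x ->
    exists c : nat -> F, (forall i, K (c i)) /\ x = \sum_(i < size s) c i * s`_i.

Definition splits_in (E : F -> Prop) (p : {poly F}) : Prop :=
  exists rs : seq F, (forall r, r \in rs -> E r) /\
    p = lead_coef p *: \prod_(r <- rs) ('X - r%:P).

Definition galois_over (K E : F -> Prop) : Prop :=
  [/\ subfield E, subsetF K E &
     forall x, E x -> exists p : {poly F},
       [/\ poly_over K p, p != 0, separable_poly p, root p x & splits_in E p]].

Definition galois_closure (K L G : F -> Prop) : Prop :=
  [/\ galois_over K G, subsetF L G &
     forall G', galois_over K G' -> subsetF L G' -> subsetF G G'].

Definition compositum (A B : F -> Prop) (x : F) : Prop :=
  forall S, subfield S -> subsetF A S -> subsetF B S -> S x.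

Definition rel_sep_closure (K E : F -> Prop) (x : F) : Prop :=
  E x /\ sep_alg_over K x.

End Defs.

(* Main.v *)
Require Import Defs.
From HB Require Import structures.
From mathcomp Require Import all_boot all_order all_algebra all_field.
From Stdlib Require Import ClassicalEpsilon.
Set Implicit Arguments. Unset Strict Implicit. Unset Printing Implicit Defensive.
Import GRing.Theory.
Local Open Scope ring_scope.

Definition asb (P : Prop) : bool := if excluded_middle_informative P then true else false.
Lemma asbP (P : Prop) : reflect P (asb P).
Proof. rewrite /asb; case: excluded_middle_informative => h; constructor; done. Qed.

Section SubT.
Variables (F : fieldType) (B : F -> Prop) (hB : subfield B).

Definition bpred : {pred F} := fun x => let _ := hB in asb (B x).

Lemma bpred_closed : GRing.divring_closed bpred.
Proof.
case: hB => h0 h1 hsub hmul hinv.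
split; rewrite /bpred.
- by apply/asbP.
- by move=> x y /asbP hx /asbP hy; apply/asbP; apply: hsub.
- move=> x y /asbP hx /asbP hy; apply/asbP; apply: hmul => //; exact: hinv.
Qed.

HB.instance Definition _ := GRing.isDivringClosed.Build F bpred bpred_closed.

Inductive BT := mkBT x & x \in bpred.
Definition vBT u := let: mkBT x _ := u in x.

HB.instance Definition _ := [isSub for vBT].
HB.instance Definition _ := [Choice of BT by <:].
HB.instance Definition _ := [SubChoice_isSubComUnitRing of BT by <:].
HB.instance Definition _ := [SubComUnitRing_isSubIntegralDomain of BT by <:].
HB.instance Definition _ := [SubIntegralDomain_isSubField of BT by <:].

Definition vBTm : {rmorphism BT -> F} := (val : BT -> F).

End SubT.

Section Basics.
Variables (F : fieldType) (B : F -> Prop) (hB : subfield B).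
Local Notation BT := (BT hB).

Lemma BTvalP (a : BT) : B (val a).
Proof. by case: a => x; rewrite /= /bpred => /asbP. Qed.

Lemma in_bpred x : B x -> x \in bpred hB.
Proof. by move=> h; apply/asbP. Qed.

Lemma lift_poly p : poly_over B p -> exists pB : {poly BT}, p = map_poly val pB.
Proof.
move=> hp; exists (\poly_(i < size p) (insubd 0 p`_i)).
apply/polyP => i; rewrite coef_map /= coef_poly.
case: ltnP => hi; first by rewrite insubdK //; apply: in_bpred.
by rewrite nth_default.
Qed.

Lemma poly_over_map (pB : {poly BT}) : poly_over B (map_poly val pB).
Proof. by move=> i; rewrite coef_map /=; apply: BTvalP. Qed.

End Basics.

Lemma subfield_image (E : fieldType) (F : fieldType) (f : {rmorphism E -> F}) :
  subfield (fun z => exists e, z = f e).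
Proof.
split.
- by exists 0; rewrite rmorph0.
- by exists 1; rewrite rmorph1.
- by move=> x y [a ->] [b ->]; exists (a - b); rewrite rmorphB.
- by move=> x y [a ->] [b ->]; exists (a * b); rewrite rmorphM.
- by move=> x [a ->]; exists a^-1; rewrite fmorphV.
Qed.

Lemma min_poly_exists (F0 L : fieldType) (iota : {rmorphism F0 -> L}) (z : L) (p : {poly F0}) :
  p != 0 -> root (map_poly iota p) z ->
  exists q : {poly F0}, [/\ q != 0, root (map_poly iota q) z &
     forall r, root (map_poly iota r) z -> r != 0 -> (size q <= size r)%N].
Proof.
move=> np rp.
pose P n := asb (exists q : {poly F0}, [/\ q != 0, root (map_poly iota q) z & size q == n]).
have hex : exists n, P n by exists (size p); apply/asbP; exists p.
case: (ex_minnP hex) => n /asbP [q [nq rq /eqP sq]] hmin.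
exists q; split => // r rr nr; rewrite sq; apply: hmin; apply/asbP; exists r; split => //.
Qed.

Lemma subfield_ext (F : fieldType) (A C : F -> Prop) :
  subfield A -> (forall z, A z <-> C z) -> subfield C.
Proof.
move=> [h0 h1 hs hm hi] e; split.
- by apply/e.
- by apply/e.
- by move=> x y /e hx /e hy; apply/e; apply: hs.
- by move=> x y /e hx /e hy; apply/e; apply: hm.
- by move=> x /e hx; apply/e; apply: hi.
Qed.

Definition adj (F : fieldType) (B : F -> Prop) (t : F) : F -> Prop :=
  fun z => exists q, poly_over B q /\ z = q.[t].

Section Adjoin.
Variables (F : fieldType) (B : F -> Prop) (hB : subfield B) (t : F).
Hypothesis halg : exists p, [/\ poly_over B p, p != 0 & root p t].

Lemma adj_min : exists2 q : {poly BT hB}, q != 0 /\ root (map_poly val q) t &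
     forall r : {poly BT hB}, root (map_poly val r) t -> r != 0 -> (size q <= size r)%N.
Proof.
case: halg => p [pB np rp].
case: (lift_poly hB pB) => pB' e; subst p.
have np' : pB' != 0 by move: np; rewrite map_poly_eq0.
case: (@min_poly_exists _ _ (vBTm hB) t pB' np' rp) => q [nq rq hq].
by exists q.
Qed.

Lemma adj_subfield : subfield (adj B t).
Proof.
case: adj_min => q [nq rq] _.
apply: (subfield_ext (subfield_image (E := subFExtend (vBTm hB) t q) subfx_inj)) => z; split.
- case=> e ->; case: (subfxE e) => h ->.
  exists (map_poly val h); split; first exact: poly_over_map.
  exact: (@subfx_inj_eval _ _ (vBTm hB) t q rq nq).
- case=> h [hh ->]; case: (lift_poly hB hh) => hB' ->.
  exists (subfx_eval (vBTm hB) t q hB'); symmetry; exact: (@subfx_inj_eval _ _ (vBTm hB) t q rq nq).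
Qed.

Lemma adj_base z : B z -> adj B t z.
Proof. 
move=> hz; exists z%:P; split; last by rewrite hornerC.
move=> i; rewrite coefC; case: (i == 0)%N => //; by case: hB.
Qed.

Lemma adj_gen : adj B t t.
Proof.
exists 'X; split; last by rewrite hornerX.
case: hB => h0 h1 _ _ _.
move=> i; rewrite coefX; by case: (i == 1)%N.
Qed.

Lemma adj_minpoly : exists g : {poly F}, [/\ poly_over B g, g != 0, root g t,
   (forall r, poly_over B r -> root r t -> g %| r) &
   (forall z, adj B t z -> exists h, [/\ poly_over B h, (size h < size g)%N & z = h.[t]])].
Proof.
case: adj_min => q [nq rq] hq.
have key : forall rB : {poly BT hB}, ((map_poly val rB) %% (map_poly val q)).[t] = (map_poly val rB).[t].
  move=> rB; rewrite {2}(divp_eq (map_poly val rB) (map_poly val q)) hornerD hornerM.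
  by rewrite (eqP rq) mulr0 add0r.
exists (map_poly val q); split.
- exact: poly_over_map.
- by rewrite map_poly_eq0.
- exact: rq.
- move=> r hr rr; case: (lift_poly hB hr) => rB er; subst r.
  rewrite dvdp_map; apply/modp_eq0P/eqP/negPn/negP => ns.
  have := hq (rB %% q); rewrite map_modp /root key (eqP rr) eqxx => /(_ isT ns).
  by rewrite leqNgt ltn_modp nq.
- move=> z [h0 [hh0 ->]]; case: (lift_poly hB hh0) => hB0 e; subst h0.
  exists (map_poly val (hB0 %% q)); split.
  + exact: poly_over_map.
  + by rewrite !size_map_poly ltn_modp.
  + by rewrite map_modp key.
Qed.

End Adjoin.

Lemma poly_overE (F : fieldType) (W : F -> Prop) (hW : subfield W) p :
  poly_over W p <-> p \is a polyOver (bpred hW).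
Proof.
split => [h | /polyOverP h i].
- by apply/polyOverP => i; apply: in_bpred.
- by have := h i; rewrite /bpred => /asbP.
Qed.

Lemma memW (F : fieldType) (W : F -> Prop) (hW : subfield W) x :
  W x <-> x \in bpred hW.
Proof. by split => [/(in_bpred hW) | ]; rewrite // /bpred => /asbP. Qed.

Lemma interp (F : fieldType) (W : F -> Prop) (hW : subfield W) (rs : seq F) :
  uniq rs -> (forall r, r \in rs -> W r) ->
  forall h : {poly F}, (size h <= size rs)%N -> (forall r, r \in rs -> W h.[r]) ->
  poly_over W h.
Proof.
elim: rs => [|r rs IH] /= urs Wrs h sh Wh.
  move: sh; rewrite leqn0 size_poly_eq0 => /eqP ->.
  by move=> i; rewrite coef0; case: hW.
case/andP: urs => nr urs.
set c := h.[r]; set h1 := h %/ ('X - r%:P).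
have eh : h = h1 * ('X - r%:P) + c%:P by rewrite {1}(divp_eq h ('X - r%:P)) modp_XsubC.
have sh1 : (size h1 <= size rs)%N.
  rewrite /h1 size_divp ?polyXsubC_eq0 // size_XsubC /=.
  by rewrite leq_subLR add1n.
have Wr : W r by apply: Wrs; rewrite inE eqxx.
have Wc : W c by apply: Wh; rewrite inE eqxx.
have oh1 : poly_over W h1.
  apply: IH => // [s hs|s hs]; first by apply: Wrs; rewrite inE hs orbT.
  have nsr : s - r != 0 by rewrite subr_eq0; apply: contraNneq nr => <-.
  have -> : h1.[s] = (h.[s] - c) / (s - r).
    by rewrite [in RHS]eh hornerD hornerM hornerXsubC hornerC addrK mulfK.
  have Whs : W h.[s] by apply: Wh; rewrite inE hs orbT.
  have Ws : W s by apply: Wrs; rewrite inE hs orbT.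
  case: (hW) => _ _ hs' hm hi; apply: hm; first exact: hs' Whs Wc.
  by apply: hi; exact: hs' Ws Wr.
apply/(poly_overE hW); rewrite eh; apply: rpredD; last by rewrite polyOverC; apply/(memW hW).
apply: rpredM; first by apply/(poly_overE hW).
by rewrite polyOverXsubC; apply/(memW hW).
Qed.

Lemma sep_split (F : fieldType) : separably_closed F ->
  forall p : {poly F}, separable_poly p ->
  exists rs : seq F, p = lead_coef p *: \prod_(r <- rs) ('X - r%:P).
Proof.
move=> hsc p; move: {2}(size p) (leqnn (size p)) => n; elim: n p => [|n IH] p sp hp.
  exists [::]; rewrite big_nil alg_polyC.
  by move: sp; rewrite leqn0 size_poly_eq0 => /eqP ->; rewrite lead_coef0.
have [sp1|sp1] := leqP (size p) 1.
  exists [::]; rewrite big_nil alg_polyC.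
  rewrite [in LHS](size1_polyC sp1) /lead_coef.
  by have -> : (size p).-1 = 0%N by case: (size p) sp1 => [|[|]].
case: (hsc p hp sp1) => x rx.
set q := p %/ ('X - x%:P).
have eq : p = q * ('X - x%:P) by rewrite divpK // dvdp_XsubCl.
have hq : separable_poly q by apply: (dvdp_separable _ hp); rewrite [X in _ %| X]eq dvdp_mulr.
have nq : q != 0 by apply: contraTneq sp1 => q0; rewrite eq q0 mul0r size_poly0.
have sq : (size q <= n)%N.
  move: sp; rewrite eq size_mul ?polyXsubC_eq0 // size_XsubC addn2 /=.
  by [].
case: (IH q sq hq) => rs ers.
exists (x :: rs); rewrite big_cons eq lead_coefM lead_coefXsubC mulr1.
by rewrite {1}ers -scalerAl mulrC.
Qed.

Section SepField.
Variables (F : fieldType) (K : F -> Prop) (hK : subfield K).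
Local Notation KT := (BT hK).
Local Notation io := (vBTm hK).

Lemma sep_lift x : sep_alg_over K x ->
  exists2 pB : {poly KT}, pB != 0 /\ separable_poly pB & root (map_poly io pB) x.
Proof.
case=> p [hp np sp rp]; case: (lift_poly hK hp) => pB e; subst p.
exists pB => //; split; first by move: np; rewrite map_poly_eq0.
by move: sp; rewrite (separable_map io).
Qed.

Lemma sep_ops x y : sep_alg_over K x -> sep_alg_over K y ->
  [/\ sep_alg_over K (x - y), sep_alg_over K (x * y) & sep_alg_over K x^-1].
Proof.
move=> hx hy.
case: (sep_lift hx) => px [npx spx] rpx.
case: (sep_lift hy) => py [npy spy] rpy.
case: (@min_poly_exists _ _ io x px npx rpx) => qx [nqx rqx mqx].
have irrx : irreducible_poly qx := (@subfx_irreducibleP _ _ io x qx rqx nqx).1 mqx.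
pose E1 : fieldExtType KT := @SubFieldExtType _ _ io x qx rqx irrx.
pose f1 : {rmorphism E1 -> F} := @subfx_inj _ _ io x qx.
have f1b : forall k : KT, f1 k%:A = io k := @subfx_inj_base _ _ io x qx rqx nqx.
have f1r : f1 (subfx_root io x qx) = x := @subfx_inj_root _ _ io x qx rqx nqx.
pose py1 : {poly E1} := map_poly (in_alg E1) py.
have epy1 : map_poly f1 py1 = map_poly io py.
  by rewrite -map_poly_comp; apply: eq_map_poly => k /=; rewrite f1b.
have npy1 : py1 != 0 by rewrite map_poly_eq0.
have rpy1 : root (map_poly f1 py1) y by rewrite epy1.
case: (@min_poly_exists _ _ f1 y py1 npy1 rpy1) => qy [nqy rqy mqy].
have irry : irreducible_poly qy := (@subfx_irreducibleP _ _ f1 y qy rqy nqy).1 mqy.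
pose E2 : fieldExtType E1 := @SubFieldExtType _ _ f1 y qy rqy irry.
pose f2 : {rmorphism E2 -> F} := @subfx_inj _ _ f1 y qy.
have f2b : forall k : E1, f2 k%:A = f1 k := @subfx_inj_base _ _ f1 y qy rqy nqy.
have f2r : f2 (subfx_root f1 y qy) = y := @subfx_inj_root _ _ f1 y qy rqy nqy.
pose L0 : fieldExtType KT := baseFieldType E2.
have f0b : forall k : KT, f2 (k%:A : L0) = io k.
  move=> k; change (f2 ((k%:A : E1)%:A) = io k); by rewrite f2b f1b.
have emap : forall pB : {poly KT}, map_poly f2 (map_poly (in_alg L0) pB) = map_poly io pB.
  by move=> pB; rewrite -map_poly_comp; apply: eq_map_poly => k /=; rewrite f0b.
have toL0 : forall (pB : {poly KT}) (z' : L0) z, f2 z' = z -> root (map_poly io pB) z ->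
    separable_poly pB -> separable_element 1 z'.
  move=> pB z' z ez rz spB; apply/separable_elementP.
  exists (map_poly (in_alg L0) pB); split.
  - by apply/polyOver1P; exists pB.
  - apply/eqP/(fmorph_inj f2); rewrite rmorph0 -horner_map ez emap; exact/eqP.
  - by rewrite separable_map.
have fromL0 : forall z' : L0, separable_element 1 z' -> sep_alg_over K (f2 z').
  move=> z' sz; case/polyOver1P: (minPolyOver 1 z') => q eq.
  exists (map_poly io q); split.
  - move=> i; rewrite coef_map; exact: (BTvalP q`_i).
  - rewrite map_poly_eq0; apply: contraTneq (monic_minPoly 1 z') => q0.
    by rewrite eq q0 map_poly0 monicE lead_coef0 eq_sym oner_eq0.
  - by rewrite separable_map -(separable_map (in_alg L0)) -eq.
  - have h : root (minPoly 1 z') z' by apply: root_minPoly.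
    by have := rmorph_root f2 h; rewrite eq emap.
pose x2 : E2 := (subfx_root io x qx)%:A.
pose x' : L0 := x2.
pose y' : L0 := subfx_root f1 y qy.
have ex : f2 x' = x by rewrite /x' /x2 f2b f1r.
have ey : f2 y' = y by rewrite /y' f2r.
have sx := toL0 px x' x ex rpx spx.
have sy := toL0 py y' y ey rpy spy.
have sE : separable 1 <<1 & [:: x'; y']>>.
  by apply: separable_Fadjoin_seq; rewrite /= sx sy.
have xE : x' \in <<1 & [:: x'; y']>>%AS by apply: seqv_sub_adjoin; rewrite inE eqxx.
have yE : y' \in <<1 & [:: x'; y']>>%AS by apply: seqv_sub_adjoin; rewrite !inE eqxx orbT.
split.
- rewrite -ex -ey -rmorphB; apply: fromL0; apply: (separableP sE).
  exact: rpredB.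
- rewrite -ex -ey -rmorphM; apply: fromL0; apply: (separableP sE).
  exact: rpredM.
- rewrite -ex -fmorphV; apply: fromL0; apply: (separableP sE).
  by rewrite memvV.
Qed.
End SepField.

Lemma sep_base (F : fieldType) (K : F -> Prop) (hK : subfield K) k :
  K k -> sep_alg_over K k.
Proof.
move=> hk; exists ('X - k%:P); split.
- by apply/(poly_overE hK); rewrite polyOverXsubC; apply/(memW hK).
- by rewrite polyXsubC_eq0.
- by rewrite unlock !derivCE coprimep1.
- by rewrite root_XsubC.
Qed.

Lemma sep_subfield (F : fieldType) (K : F -> Prop) (hK : subfield K) :
  subfield (sep_alg_over K).
Proof.
have [h0 h1 _ _ _] := hK.
split.
- exact: sep_base.
- exact: sep_base.
- by move=> x y hx hy; case: (sep_ops hK hx hy).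
- by move=> x y hx hy; case: (sep_ops hK hx hy).
- by move=> x hx; case: (sep_ops hK hx hx).
Qed.

Section Step.
Variables (F : fieldType) (K G : F -> Prop) (hK : subfield K) (hG : galois_over K G).

Definition Pgood (B : F -> Prop) := forall z, B z -> sep_alg_over K z -> G z.

Lemma G_sep r : G r -> sep_alg_over K r.
Proof. by case: hG => _ _ hn /hn [p [? ? ? ? _]]; exists p. Qed.

Lemma step (B : F -> Prop) (hB : subfield B) (KB : subsetF K B) (t : F) :
  G t -> Pgood B -> [/\ Pgood (adj B t), subfield (adj B t) & subsetF B (adj B t)].
Proof.
move=> Gt PB.
have [hGs KG hGn] := hG.
case: (hGn t Gt) => qt [oqt nqt sqt rqt [rs [Grs eqt]]].
have oqtB : poly_over B qt by move=> i; apply: KB.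
have halg : exists p, [/\ poly_over B p, p != 0 & root p t] by exists qt.
split; [|exact: adj_subfield|by move=> z; apply: adj_base].
move=> z hz [pz [opz npz spz rpz]].
case: (adj_minpoly hB halg) => g [og ng rg dg red].
case: (red z hz) => h [oh sh ez].
have lc0 : lead_coef qt != 0 by rewrite lead_coef_eq0.
have hdiv : g %| \prod_(r <- rs) ('X - r%:P).
  by rewrite -(dvdpZr _ _ lc0) -eqt; apply: dg.
have [m em] := dvdp_prod_XsubC hdiv.
set S := mask m rs in em.
have urs : uniq rs.
  rewrite -separable_prod_XsubC -(eqp_separable (eqp_scale _ lc0)) -eqt; exact: sqt.
have uS : uniq S by apply: mask_uniq.
have sS : size g = (size S).+1 by rewrite (eqp_size em) size_prod_XsubC.
have rS : forall s, s \in S -> root g s.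
  by move=> s hs; rewrite (eqp_root em) root_prod_XsubC.
have GS : forall s, s \in S -> G s by move=> s hs; apply: Grs; apply: (mem_mask hs).
have ohW : poly_over (sep_alg_over K) h.
  apply: (interp (sep_subfield hK) uS).
  - by move=> s hs; apply: G_sep; apply: GS.
  - by rewrite -ltnS -sS.
  - move=> s hs; exists pz; split => //.
    have ocomp : poly_over B (pz \Po h).
      apply/(poly_overE hB); apply: polyOver_comp; apply/(poly_overE hB) => //.
      by move=> i; apply: KB.
    have rc : root (pz \Po h) t by rewrite /root horner_comp -ez.
    have := root_dvdp (dg _ ocomp rc) (rS s hs).
    by rewrite /root horner_comp.
rewrite ez; apply/(memW hGs); apply: rpred_horner; last by apply/(memW hGs).
apply/(poly_overE hGs) => i; apply: PB; [exact: oh | exact: ohW].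
Qed.

End Step.

Fixpoint towr (F : fieldType) (B : F -> Prop) (T : seq F) : F -> Prop :=
  if T is t :: T' then adj (towr B T') t else B.

Lemma adj_mono (F : fieldType) (B B' : F -> Prop) t :
  subsetF B B' -> subsetF (adj B t) (adj B' t).
Proof. by move=> hs z [q [oq ->]]; exists q; split => // i; apply: hs. Qed.

Lemma towr_mono (F : fieldType) (B B' : F -> Prop) T :
  subsetF B B' -> subsetF (towr B T) (towr B' T).
Proof. by move=> hs; elim: T => //= t T IH; apply: adj_mono. Qed.

Lemma towr_cat (F : fieldType) (B : F -> Prop) T1 T2 :
  towr B (T1 ++ T2) = towr (towr B T2) T1.
Proof. by elim: T1 => //= t T1 ->. Qed.

Lemma towr_base (F : fieldType) (B : F -> Prop) T :
  B 0 -> towr B T 0 /\ subsetF B (towr B T).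
Proof.
move=> B0; elim: T => [|t T [IH0 IHs]] /=; first by split. 
have base : forall z, towr B T z -> adj (towr B T) t z.
  move=> z hz; exists z%:P; split; last by rewrite hornerC.
  by move=> i; rewrite coefC; case: (i == 0)%N.
by split; [apply: base | move=> z /IHs; apply: base].
Qed.

Section Tower.
Variables (F : fieldType) (K G M : F -> Prop) (hK : subfield K) (hG : galois_over K G).
Variables (hM : subfield M) (KM : subsetF K M) (PM : Pgood K G M).

Lemma towr_props T : (forall t, t \in T -> G t) ->
  [/\ subfield (towr M T), subsetF M (towr M T) & Pgood K G (towr M T)].
Proof.
elim: T => [|t T IH] hT /=; first by split.
have [hs hMs hP] : [/\ subfield (towr M T), subsetF M (towr M T) & Pgood K G (towr M T)].
  by apply: IH => s hs; apply: hT; rewrite inE hs orbT.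
have Gt : G t by apply: hT; rewrite inE eqxx.
have [P' s' sub'] := step hK hG hs (fun z hz => hMs z (KM hz)) Gt hP.
by split => // z /hMs /sub'.
Qed.

Definition Sfin (z : F) := exists T, (forall t, t \in T -> G t) /\ towr M T z.

Lemma Sfin_bin z1 z2 : Sfin z1 -> Sfin z2 ->
  exists T, [/\ (forall t, t \in T -> G t), towr M T z1 & towr M T z2].
Proof.
move=> [T1 [G1 h1]] [T2 [G2 h2]]; exists (T1 ++ T2); split.
- by move=> t; rewrite mem_cat => /orP[/G1|/G2].
- rewrite towr_cat; apply: (towr_mono _ h1).
  by case: (towr_props G2).
- rewrite towr_cat; have [_ ] := towr_base T1 (proj1 (towr_base T2 (let: And5 h0 _ _ _ _ := hM in h0))).
  by apply.
Qed.

Lemma Sfin_subfield : subfield Sfin.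
Proof.
have [h0 h1 _ _ _] := hM.
split.
- by exists [::].
- by exists [::].
- move=> x y hx hy; case: (Sfin_bin hx hy) => T [GT hxT hyT]; exists T; split => //.
  by case: (towr_props GT) => [[_ _ hs _ _] _ _]; apply: hs.
- move=> x y hx hy; case: (Sfin_bin hx hy) => T [GT hxT hyT]; exists T; split => //.
  by case: (towr_props GT) => [[_ _ _ hm _] _ _]; apply: hm.
- move=> x [T [GT hxT]]; exists T; split => //.
  by case: (towr_props GT) => [[_ _ _ _ hi] _ _]; apply: hi.
Qed.

Lemma Sfin_good z : Sfin z -> sep_alg_over K z -> G z.
Proof. by case=> T [GT hz]; case: (towr_props GT) => _ _; apply. Qed.

Lemma Sfin_G t : G t -> Sfin t.
Proof.
move=> Gt; exists [:: t]; split; first by move=> s; rewrite inE => /eqP ->.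
by apply: adj_gen.
Qed.

Lemma Sfin_M z : M z -> Sfin z.
Proof. by move=> hz; exists [::]. Qed.

End Tower.

Unset Implicit Arguments.

Theorem mainTheorem2 (F : fieldType) (K M : F -> Prop) :
  subfield K -> subfield M -> subsetF K M ->
  (forall x : F, sep_alg_over M x) -> separably_closed F ->
  (forall L1 : F -> Prop,
     subfield L1 -> subsetF M L1 -> finite_over M L1 ->
     (forall x, L1 x -> sep_alg_over M x) ->
     exists L : F -> Prop,
       [/\ subfield L, subsetF K L, subsetF L M,
           finite_over K L /\ (forall x, L x -> sep_alg_over K x) &
           exists Lt : F -> Prop,
             galois_closure K L Lt /\ subsetF L1 (compositum Lt M)]) ->
  galois_closure K (rel_sep_closure K M) (rel_sep_closure K (fun _ => True)).
Proof.
move=> hK hM KM sepM hsc hyp.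
have hKb : subfield (rel_sep_closure K (fun _ => True)).
  apply: (subfield_ext (sep_subfield hK)) => z; split => [h|[]//].
  by split.
split.
- split => //; first by move=> k hk; split => //; apply: sep_base.
  move=> x [_ [p [op np sp rp]]]; exists p; split => //.
  case: (sep_split hsc sp) => rs ers; exists rs; split => // r hr.
  split => //; exists p; split => //.
  have lc0 : lead_coef p != 0 by rewrite lead_coef_eq0.
  by rewrite ers rootZ // root_prod_XsubC.
- by move=> z [_ hz]; split.
move=> G hG KaG x [_ sx].
have PM : Pgood K G M by move=> z hz sz; apply: KaG; split.
case: (sepM x) => p [op np sp rp].
have halg : exists p, [/\ poly_over M p, p != 0 & root p x] by exists p.
have hL1 := adj_subfield hM halg.
have ML1 : subsetF M (adj M x) by move=> z; apply: adj_base.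
have finL1 : finite_over M (adj M x).
  case: (adj_minpoly hM halg) => g [og ng rg dg red].
  exists (mkseq (fun i => x ^+ i) (size g)) => z hz.
  case: (red z hz) => h [oh sh ->]; exists (fun i => h`_i); split => //.
  rewrite size_mkseq (horner_coef_wide _ (ltnW sh)); apply: eq_bigr => i _.
  by rewrite nth_mkseq.
case: (hyp _ hL1 ML1 finL1 (fun z _ => sepM z)) => L [hL KL LM [_ sepL] [Lt [[_ LLt minLt] subc]]].
have LtG : subsetF Lt G.
  apply: minLt => // l hl; apply: KaG; split; [exact: LM | exact: sepL].
have Sx : Sfin G M x.
  apply: (subc x (adj_gen hM x)).
  - exact: (Sfin_subfield hK hG hM KM PM).
  - by move=> t /LtG; apply: Sfin_G.
  - exact: Sfin_M.
exact: (Sfin_good hK hG hM KM PM Sx sx).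
Qed.
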